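(* For all $x,y\in\mathbb{C}$ and all integers $n\ge0$, \[ \sum_{k=0}^n x^k\big(yL_{2k}(y)+(x(y^2+2)-2)F_{2k+2}(y)\big)=x^{n+1}(y^2+2)F_{2n+2}(y) \] and \[ \sum_{k=0}^n x^k\big(y(y^2+4)F_{2k}(y)+(x(y^2+2)-2)L_{2k+2}(y)\big)=(y^2+2)\big(x^{n+1}L_{2n+2}(y)-2\big). \]
   Context: The Fibonacci polynomials $F_n(y)$ and Lucas polynomials $L_n(y)$ are defined by $F_0(y)=0$, $F_1(y)=1$, $L_0(y)=2$, $L_1(y)=y$ and $W_n(y)=yW_{n-1}(y)+W_{n-2}(y)$ for $n\ge2$ (for $W=F$ and $W=L$). *)

(* Defs.v *)
From HB Require Import structures.
From mathcomp Require Import all_boot all_order all_algebra.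
From mathcomp Require Import complex.
From mathcomp Require Import Rstruct.
Set Implicit Arguments. Unset Strict Implicit. Unset Printing Implicit Defensive.
Import Order.TTheory GRing.Theory Num.Theory.
Local Open Scope ring_scope.

Notation CC := (complex Rdefinitions.R).

Fixpoint Wpair {K : comNzRingType} (a b y : K) (n : nat) : K * K :=
  match n with
  | 0 => (a, b)
  | n'.+1 => let p := Wpair a b y n' in (p.2, y * p.2 + p.1)
  end.

Definition fibp {K : comNzRingType} (n : nat) (y : K) : K := (Wpair 0 1 y n).1.
Definition lucp {K : comNzRingType} (n : nat) (y : K) : K := (Wpair 2 y y n).1.

(* Main.v *)
Require Import Defs.
From HB Require Import structures.
From mathcomp Require Import all_boot all_order all_algebra.
From mathcomp Require Import complex.
From mathcomp Require Import Rstruct.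
From mathcomp Require Import ring zify.
Import GRing.Theory.
Local Open Scope ring_scope.

Lemma fibS (y : CC) m : fibp m.+2 y = y * fibp m.+1 y + fibp m y.
Proof. by rewrite /fibp /=. Qed.

Lemma lucS (y : CC) m : lucp m.+2 y = y * lucp m.+1 y + lucp m y.
Proof. by rewrite /lucp /=. Qed.

Lemma lucF (y : CC) m : lucp m y = 2 * fibp m.+1 y - y * fibp m y.
Proof.
suff: lucp m y = 2 * fibp m.+1 y - y * fibp m y /\
      lucp m.+1 y = 2 * fibp m.+2 y - y * fibp m.+1 y by case.
elim: m => [|m [IH1 IH2]].
  by rewrite /lucp /fibp /=; split; ring.
split => //. rewrite lucS IH1 IH2 !fibS; ring.
Qed.

Theorem corollary6 (x y : CC) (n : nat) :
  \sum_(0 <= k < n.+1)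
     x ^+ k * (y * lucp (2 * k) y + (x * (y ^+ 2 + 2) - 2) * fibp (2 * k + 2) y)
   = x ^+ n.+1 * (y ^+ 2 + 2) * fibp (2 * n + 2) y
  /\
  \sum_(0 <= k < n.+1)
     x ^+ k * (y * (y ^+ 2 + 4) * fibp (2 * k) y
               + (x * (y ^+ 2 + 2) - 2) * lucp (2 * k + 2) y)
   = (y ^+ 2 + 2) * (x ^+ n.+1 * lucp (2 * n + 2) y - 2).
Proof.
elim: n => [|n [IH1 IH2]].
  rewrite !big_nat1 !muln0 !add0n !lucF /fibp /=; split; ring.
have E : (2 * n.+1 = (2 * n).+2)%N by lia.
have E2 : (2 * n.+1 + 2 = (2 * n).+4)%N by lia.
have E3 : (2 * n + 2 = (2 * n).+2)%N by lia.
rewrite big_nat_recr //= IH1 big_nat_recr //= IH2.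
rewrite E2 E E3 in IH1 IH2 *.
rewrite !lucF !(fibS y (2 * n).+3) !(fibS y (2*n).+2) !(fibS y (2*n).+1).
rewrite (exprS x n.+1); move: (fibp (2 * n).+2 y) (fibp (2 * n).+1 y) (x ^+ n.+1) => F a X.
split; ring.
Qed.
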